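(* Assume $\Delta=0$. Let $\lambda_1,\lambda_2,\lambda_3\in K$ with $\lambda_ic_i\in N$ and $s_i':=s_i\nu_i$ where $\nu_i\in N$ corresponds to $\lambda_ic_i$. (1) If $p=2p_1$ is even, then $(s_1's_2')^{p_1}=(s_1s_2)^{p_1}\nu$ with $\nu=\frac{2}{4-\alpha}\big((2\lambda_1+\lambda_2)c_1+(\alpha\lambda_1+2\lambda_2)c_2\big)=\Big(-2\lambda_2,\ \frac{2(2\beta+\alpha l)}{4-\alpha}\lambda_1+\frac{2(\beta+2l)}{4-\alpha}\lambda_2\Big)$. (2) If $q=2q_1$ is even, then $(s_1's_3')^{q_1}=(s_1s_3)^{q_1}\nu'$ with $\nu'=\frac{2}{4-\beta}\big((2\lambda_1+\lambda_3)c_1+(\beta\lambda_1+2\lambda_3)c_3\big)=\Big(\frac{2(2\alpha+\beta m)}{4-\beta}\lambda_1+\frac{2(\alpha+2m)}{4-\beta}\lambda_3,\ -2\lambda_3\Big)$. (3) If $r=2r_1$ is even, then $(s_2's_3')^{r_1}=(s_2s_3)^{r_1}\nu''$ with $\nu''=\frac{2}{4-\gamma}\big((2\lambda_2+m\lambda_3)c_2+(l\lambda_2+2\lambda_3)c_3\big)=(-2\lambda_2,-2\lambda_3)$.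
   Context: Setting. Let $p,q,r\ge 3$ be integers and $W=W(p,q,r)$ the Coxeter group with generators $s_1,s_2,s_3$ and relations $s_i^2=1$, $(s_1s_2)^p=(s_1s_3)^q=(s_2s_3)^r=1$. Let $\alpha=4\cos^2(\pi k_1/p)$, $\beta=4\cos^2(\pi k_2/q)$, $\gamma=4\cos^2(\pi k_3/r)$ with $\gcd(k_1,p)=\gcd(k_2,q)=\gcd(k_3,r)=1$ (so $0<\alpha,\beta,\gamma<4$), and let $l,m\in\mathbb{C}$ with $lm=\gamma$. Let $K\subset\mathbb{C}$ be a field containing $\alpha,\beta,\gamma,l,m$, and $M$ a $3$-dimensional $K$-vector space with basis $(a_1,a_2,a_3)$. The reflection representation $R:W\to GL(M)$ with parameters $(\alpha,\beta,\gamma;l,m)$ is defined by: for $x=\lambda_1a_1+\lambda_2a_2+\lambda_3a_3$, $R(s_1)x=x-(2\lambda_1-\alpha\lambda_2-\beta\lambda_3)a_1$, $R(s_2)x=x-(-\lambda_1+2\lambda_2-l\lambda_3)a_2$, $R(s_3)x=x-(-\lambda_1-m\lambda_2+2\lambda_3)a_3$. Put $G=R(W)$ and write $s_i$ for $R(s_i)$. Let $\Delta=8-2\alpha-2\beta-2\gamma-(\alpha l+\beta m)$; $R$ is reducible iff $\Delta=0$. Reducible setting. Assume $\Delta=0$. Put $b=(4-\gamma)a_1+(l+2)a_2+(m+2)a_3$; then the space of $G$-fixed vectors is $C_M(G)=Kb$ and $(b,a_2,a_3)$ is a basis of $M$. Let $N=N(G)$ be the subgroup of elements of $G$ acting trivially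 on $M/C_M(G)$. Each $\zeta\in N$ satisfies $\zeta(b)=b$, $\zeta(a_2)=a_2+\lambda b$, $\zeta(a_3)=a_3+\mu b$ for a unique $(\lambda,\mu)\in K^2$; the map $\zeta\mapsto(\lambda,\mu)$ is an injective group homomorphism $N\to (K^2,+)$, through which $N$ is identified with an additive subgroup of $K^2$ (and written additively). Put $c_1=(\alpha,\beta)$, $c_2=(-2,l)$, $c_3=(m,-2)\in K^2$. *)

(* Defs.v *)
From HB Require Import structures.
From mathcomp Require Import all_boot all_order all_algebra.
Set Implicit Arguments. Unset Strict Implicit. Unset Printing Implicit Defensive.
Import Order.TTheory GRing.Theory Num.Theory.
Local Open Scope ring_scope.

Section Defs.
Variable C : numClosedFieldType.

(* 4 cos^2(pi k/p) = 2 + zeta + zeta^-1 with zeta = exp(2 pi i k/p),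
   a primitive p-th root of unity iff gcd(k,p) = 1. *)
Definition cos2_param (z : C) : C := 2 + z + z^-1.

(* coordinates w.r.t. the basis (a1,a2,a3); column vectors *)
Definition avec (i : nat) : 'cV[C]_3 := delta_mx (inord i) 0.
Definition row3 (x y z : C) : 'rV[C]_3 := \row_(j < 3) [:: x; y; z]`_j.
Definition pair2 (x y : C) : 'rV[C]_2 := \row_(j < 2) [:: x; y]`_j.

Definition S1 (al be : C) : 'M[C]_3 := 1%:M - avec 0 *m row3 2 (- al) (- be).
Definition S2 (l : C) : 'M[C]_3 := 1%:M - avec 1 *m row3 (-1) 2 (- l).
Definition S3 (m : C) : 'M[C]_3 := 1%:M - avec 2 *m row3 (-1) (- m) 2.

(* G = R(W): the set of all products of the generators (s_i^2 = 1) *)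
Inductive genG (T1 T2 T3 : 'M[C]_3) : 'M[C]_3 -> Prop :=
  | genG1 : genG T1 T2 T3 1%:M
  | genG_1 g : genG T1 T2 T3 g -> genG T1 T2 T3 (T1 *m g)
  | genG_2 g : genG T1 T2 T3 g -> genG T1 T2 T3 (T2 *m g)
  | genG_3 g : genG T1 T2 T3 g -> genG T1 T2 T3 (T3 *m g).

Definition inG (al be ga l m : C) (g : 'M[C]_3) : Prop :=
  genG (S1 al be) (S2 l) (S3 m) g.

Definition Delta (al be ga l m : C) : C :=
  8 - 2 * al - 2 * be - 2 * ga - (al * l + be * m).

Definition bvec (ga l m : C) : 'cV[C]_3 :=
  (4 - ga) *: avec 0 + (l + 2) *: avec 1 + (m + 2) *: avec 2.

(* g is an element of N(G) corresponding to the pair P = (lambda, mu):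
   g in G, g b = b, g a2 = a2 + lambda b, g a3 = a3 + mu b. *)
Definition inN_with (al be ga l m : C) (g : 'M[C]_3) (P : 'rV[C]_2) : Prop :=
  [/\ inG al be ga l m g,
      g *m bvec ga l m = bvec ga l m,
      g *m avec 1 = avec 1 + P 0 0 *: bvec ga l m &
      g *m avec 2 = avec 2 + P 0 1 *: bvec ga l m].

Definition c1 (al be : C) : 'rV[C]_2 := pair2 al be.
Definition c2 (l : C) : 'rV[C]_2 := pair2 (-2) l.
Definition c3 (m : C) : 'rV[C]_2 := pair2 m (-2).

End Defs.

(* Main.v *)
Require Import Defs.
From HB Require Import structures.
From mathcomp Require Import all_boot all_order all_algebra.
From mathcomp Require Import ring.
Import Order.TTheory GRing.Theory Num.Theory.
Local Open Scope ring_scope.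
Section Mx3.
Variable C : numClosedFieldType.
Implicit Types (a b c d e f g h k x y z u v w al be ga l m : C).
Definition mx3 (a b c d e f g h k : C) : 'M[C]_3 := \matrix_(i < 3, j < 3)
  nth 0 (nth [::] [:: [:: a; b; c]; [:: d; e; f]; [:: g; h; k]] i) j.
Definition cv3 (x y z : C) : 'cV[C]_3 := \col_(i < 3) [:: x; y; z]`_i.
Ltac ent := apply/matrixP => -[[|[|[|?]]] ?] -[[|[|[|?]]] ?] //;
  rewrite !mxE ?big_ord_recr ?big_ord0 /= ?mxE /=.
Ltac entc := apply/matrixP => -[[|[|[|?]]] ?] -[[|?] ?] //;
  rewrite !mxE ?big_ord_recr ?big_ord0 /= ?mxE /=.
Ltac entr := apply/matrixP => -[[|?] ?] -[[|[|[|?]]] ?] //;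
  rewrite !mxE ?big_ord_recr ?big_ord0 /= ?mxE /=.
Lemma mulmx3 a1 a2 a3 a4 a5 a6 a7 a8 a9 b1 b2 b3 b4 b5 b6 b7 b8 b9 :
  mx3 a1 a2 a3 a4 a5 a6 a7 a8 a9 *m mx3 b1 b2 b3 b4 b5 b6 b7 b8 b9 =
  mx3 (a1*b1+a2*b4+a3*b7) (a1*b2+a2*b5+a3*b8) (a1*b3+a2*b6+a3*b9)
      (a4*b1+a5*b4+a6*b7) (a4*b2+a5*b5+a6*b8) (a4*b3+a5*b6+a6*b9)
      (a7*b1+a8*b4+a9*b7) (a7*b2+a8*b5+a9*b8) (a7*b3+a8*b6+a9*b9).
Proof. ent. all: ring. Qed.
Lemma mulmxcv3 a1 a2 a3 a4 a5 a6 a7 a8 a9 x y z :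
  mx3 a1 a2 a3 a4 a5 a6 a7 a8 a9 *m cv3 x y z =
  cv3 (a1*x+a2*y+a3*z) (a4*x+a5*y+a6*z) (a7*x+a8*y+a9*z).
Proof. entc. all: ring. Qed.
Lemma mulrowmx3 a1 a2 a3 a4 a5 a6 a7 a8 a9 x y z :
  row3 x y z *m mx3 a1 a2 a3 a4 a5 a6 a7 a8 a9 =
  row3 (x*a1+y*a4+z*a7) (x*a2+y*a5+z*a8) (x*a3+y*a6+z*a9).
Proof. entr. all: ring. Qed.
Lemma mulcvrow x y z u v w :
  cv3 x y z *m row3 u v w = mx3 (x*u) (x*v) (x*w) (y*u) (y*v) (y*w) (z*u) (z*v) (z*w).
Proof. ent. all: ring. Qed.
Lemma mulrowcv x y z u v w :
  row3 x y z *m cv3 u v w = (x*u+y*v+z*w)%:M.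
Proof. apply/matrixP => -[[|?] ?] -[[|?] ?] //;
  rewrite !mxE ?big_ord_recr ?big_ord0 /= ?mxE /=. ring. Qed.
Lemma addmx3 a1 a2 a3 a4 a5 a6 a7 a8 a9 b1 b2 b3 b4 b5 b6 b7 b8 b9 :
  mx3 a1 a2 a3 a4 a5 a6 a7 a8 a9 + mx3 b1 b2 b3 b4 b5 b6 b7 b8 b9 =
  mx3 (a1+b1) (a2+b2) (a3+b3) (a4+b4) (a5+b5) (a6+b6) (a7+b7) (a8+b8) (a9+b9).
Proof. by ent. Qed.
Lemma submx3 a1 a2 a3 a4 a5 a6 a7 a8 a9 b1 b2 b3 b4 b5 b6 b7 b8 b9 :
  mx3 a1 a2 a3 a4 a5 a6 a7 a8 a9 - mx3 b1 b2 b3 b4 b5 b6 b7 b8 b9 =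
  mx3 (a1-b1) (a2-b2) (a3-b3) (a4-b4) (a5-b5) (a6-b6) (a7-b7) (a8-b8) (a9-b9).
Proof. by ent. Qed.
Lemma scalemx3 c a1 a2 a3 a4 a5 a6 a7 a8 a9 :
  c *: mx3 a1 a2 a3 a4 a5 a6 a7 a8 a9 =
  mx3 (c*a1) (c*a2) (c*a3) (c*a4) (c*a5) (c*a6) (c*a7) (c*a8) (c*a9).
Proof. by ent. Qed.
Lemma addcv3 x y z u v w : cv3 x y z + cv3 u v w = cv3 (x+u) (y+v) (z+w).
Proof. by entc. Qed.
Lemma subcv3 x y z u v w : cv3 x y z - cv3 u v w = cv3 (x-u) (y-v) (z-w).
Proof. by entc. Qed.
Lemma scalecv3 c x y z : c *: cv3 x y z = cv3 (c*x) (c*y) (c*z).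
Proof. by entc. Qed.
Lemma addrow3 x y z u v w : row3 x y z + row3 u v w = row3 (x+u) (y+v) (z+w).
Proof. by entr. Qed.
Lemma subrow3 x y z u v w : row3 x y z - row3 u v w = row3 (x-u) (y-v) (z-w).
Proof. by entr. Qed.
Lemma scalerow3 c x y z : c *: row3 x y z = row3 (c*x) (c*y) (c*z).
Proof. by entr. Qed.
Lemma one3 : (1%:M : 'M[C]_3) = mx3 1 0 0 0 1 0 0 0 1.
Proof. by ent. Qed.
Lemma avec0 : avec C 0 = cv3 1 0 0.
Proof. by entc; rewrite -!val_eqE /= inordK. Qed.
Lemma avec1 : avec C 1 = cv3 0 1 0.
Proof. by entc; rewrite -!val_eqE /= inordK. Qed.
Lemma avec2 : avec C 2 = cv3 0 0 1.
Proof. by entc; rewrite -!val_eqE /= inordK. Qed.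
Lemma mx3_eq a1 a2 a3 a4 a5 a6 a7 a8 a9 b1 b2 b3 b4 b5 b6 b7 b8 b9 :
  a1 = b1 -> a2 = b2 -> a3 = b3 -> a4 = b4 -> a5 = b5 -> a6 = b6 ->
  a7 = b7 -> a8 = b8 -> a9 = b9 ->
  mx3 a1 a2 a3 a4 a5 a6 a7 a8 a9 = mx3 b1 b2 b3 b4 b5 b6 b7 b8 b9.
Proof. by move=> -> -> -> -> -> -> -> -> ->. Qed.
Lemma cv3_eq x y z u v w : x = u -> y = v -> z = w -> cv3 x y z = cv3 u v w.
Proof. by move=> -> -> ->. Qed.
Lemma row3_eq x y z u v w : x = u -> y = v -> z = w -> row3 x y z = row3 u v w.
Proof. by move=> -> -> ->. Qed.
Lemma pair2E x y : pair2 x y 0 0 = x /\ pair2 x y 0 1 = y.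
Proof. by rewrite !mxE. Qed.
Lemma pair2_eq x y u v : x = u -> y = v -> pair2 x y = pair2 u v.
Proof. by move=> -> ->. Qed.
Lemma scalepair2 c x y : c *: pair2 x y = pair2 (c*x) (c*y).
Proof. by apply/matrixP => -[[|?] ?] -[[|[|?]] ?] //; rewrite !mxE. Qed.
Lemma addpair2 x y u v : pair2 x y + pair2 u v = pair2 (x+u) (y+v).
Proof. by apply/matrixP => -[[|?] ?] -[[|[|?]] ?] //; rewrite !mxE. Qed.
Lemma bvecE ga l m : bvec ga l m = cv3 (4 - ga) (l + 2) (m + 2).
Proof. by rewrite /bvec avec0 avec1 avec2 !scalecv3 !addcv3; apply: cv3_eq; ring. Qed.
Lemma S1E al be : S1 al be = mx3 (-1) al be 0 1 0 0 0 1.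
Proof. rewrite /S1 one3 avec0 mulcvrow submx3; apply: mx3_eq; ring. Qed.
Lemma S2E l : S2 l = mx3 1 0 0 1 (-1) l 0 0 1.
Proof. rewrite /S2 one3 avec1 mulcvrow submx3; apply: mx3_eq; ring. Qed.
Lemma S3E m : S3 m = mx3 1 0 0 0 1 0 1 m (-1).
Proof. rewrite /S3 one3 avec2 mulcvrow submx3; apply: mx3_eq; ring. Qed.
End Mx3.

Set Implicit Arguments. Unset Strict Implicit.
Section Gen.
Variable C : numClosedFieldType.
Implicit Types (t s : 'M[C]_3) (b : 'cV[C]_3) (phi psi : 'rV[C]_3).
Fixpoint Useq (t : 'M[C]_3) (phi : 'rV[C]_3) (n : nat) : 'rV[C]_3 :=
  if n is n'.+1 then Useq t phi n' *m t + phi else 0.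

Lemma Useq_b t b phi : t *m b = b -> phi *m b = 0 -> forall n, Useq t phi n *m b = 0.
Proof.
move=> tb pb; elim=> [|n IH] /=; first by rewrite mul0mx.
by rewrite mulmxDl -mulmxA tb IH pb addr0.
Qed.

Lemma pow_tmu t b phi : t *m b = b -> phi *m b = 0 -> forall n,
  (t *m (1%:M + b *m phi)) ^+ n = t ^+ n *m (1%:M + b *m Useq t phi n).
Proof.
move=> tb pb; elim=> [|n IH].
  by rewrite !expr0 /= mulmx0 addr0 mulmx1.
rewrite !exprSr IH -!mulmxE -!mulmxA; congr (_ *m _).
have Ub := Useq_b tb pb n.
rewrite /= !mulmxDl !mulmxDr !mul1mx !mulmx1 !mulmxA tb.
have Utb : Useq t phi n *m t *m b = 0 by rewrite -mulmxA tb Ub.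
have -> : b *m Useq t phi n *m t *m b *m phi = 0.
  by rewrite -(mulmxA b) -(mulmxA b) Utb mulmx0 mul0mx.
by rewrite addr0 -addrA [b *m phi + _]addrC.
Qed.

Lemma mulN b phi psi : phi *m b = 0 ->
  (1%:M + b *m phi) *m (1%:M + b *m psi) = 1%:M + b *m (phi + psi).
Proof.
move=> pb; rewrite mulmxDl !mulmxDr !mul1mx !mulmx1 !mulmxA.
rewrite -(mulmxA b phi b) pb mulmx0 mul0mx addr0.
by rewrite -addrA [b *m psi + _]addrC.
Qed.

Lemma conjN s b phi : s *m b = b ->
  (1%:M + b *m phi) *m s = s *m (1%:M + b *m (phi *m s)).
Proof.
move=> sb; rewrite mulmxDl mulmxDr mul1mx mulmx1 !mulmxA sb.
by rewrite -mulmxA.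
Qed.

Lemma conj_step s1 s2 b phi1 phi2 : s2 *m b = b -> phi1 *m b = 0 ->
  s1 *m (1%:M + b *m phi1) *m (s2 *m (1%:M + b *m phi2)) =
  s1 *m s2 *m (1%:M + b *m (phi1 *m s2 + phi2)).
Proof.
move=> sb pb.
rewrite -!mulmxA; congr (_ *m _).
rewrite mulmxA conjN // -mulmxA mulN //.
by rewrite -mulmxA sb.
Qed.
End Gen.
Section Gen2.
Variable C : numClosedFieldType.
Implicit Types (t s : 'M[C]_3) (b : 'cV[C]_3) (phi psi : 'rV[C]_3) (z : C).
Definition Ec z := (z-1)*(z^-1-1)*(z - z^-1).
Definition Fc z k := - z^-1 * (z^+k - 1) * (z^-1 - 1) + z * ((z^-1)^+k - 1) * (z - 1).
Definition Gc z k := (z^+k - 1) * (z^-1 - 1) - ((z^-1)^+k - 1) * (z - 1).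

Lemma Useq_gen t phi psi z : z != 0 -> phi *m t = psi -> psi *m t = (z + z^-1) *: psi - phi ->
  forall k, Ec z *: Useq t phi k = Fc z k *: phi + Gc z k *: psi.
Proof.
move=> z0 pt st; elim=> [|k IH] /=.
  by apply/rowP => j; rewrite !mxE /Fc /Gc !expr0; ring.
rewrite scalerDr scalemxAl IH mulmxDl -!scalemxAl pt st.
apply/rowP => j; rewrite !mxE /Fc /Gc !exprSr /Ec. field. done.
Qed.
End Gen2.
Section Gen3.
Variable C : numClosedFieldType.
Implicit Types (t s : 'M[C]_3) (b : 'cV[C]_3) (phi psi : 'rV[C]_3) (z : C).
Lemma Useq_half t phi psi z n : z != 0 -> z != 1 -> z^+2 != 1 -> z^+n = -1 ->
  phi *m t = psi -> psi *m t = (z + z^-1) *: psi - phi ->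
  Useq t phi n = (2 - z - z^-1)^-1 *: ((-2 * (z + z^-1 - 1)) *: phi + 2 *: psi).
Proof.
move=> z0 z1 z2 zn pt st.
have H := Useq_gen z0 pt st n.
move: H; rewrite /Fc /Gc exprVn zn => H.
have a1 : z - 1 != 0 by rewrite subr_eq0.
have a2 : z^-1 - 1 != 0 by rewrite subr_eq0 invr_eq1.
have a3 : z - z^-1 != 0.
  rewrite subr_eq0; apply: contra z2 => /eqP h.
  by rewrite expr2 {2}h mulfV.
have E0 : Ec z != 0 by rewrite /Ec !mulf_neq0.
apply/rowP => j; move/rowP/(_ j): H; rewrite !mxE => H.
apply: (mulfI E0); rewrite H /Ec.
field. rewrite z0 /=; have -> : (2 - z) * z - 1 = - ((z-1)*(z-1)) by ring.
by rewrite oppr_eq0 mulf_neq0.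
Qed.
End Gen3.

Ltac conc := rewrite ?bvecE ?avec0 ?avec1 ?avec2 ?one3 ?S1E ?S2E ?S3E;
  rewrite ?(mulcvrow, mulmx3, mulmxcv3, mulrowmx3, addmx3, submx3, scalemx3,
            addcv3, subcv3, scalecv3, addrow3, subrow3, scalerow3).

Section NF.
Variable C : numClosedFieldType.
Implicit Types (x y ga l m : C).
Definition phiv ga l m x y : 'rV[C]_3 := row3 (-(x*(l+2)+y*(m+2))/(4-ga)) x y.

Lemma col_ext (g h : 'M[C]_3) : g *m avec C 0 = h *m avec C 0 ->
  g *m avec C 1 = h *m avec C 1 -> g *m avec C 2 = h *m avec C 2 -> g = h.
Proof.
move=> e0 e1 e2.
have key : forall k : ordinal 3, g *m delta_mx k (0 : 'I_1) = h *m delta_mx k (0 : 'I_1).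
  move=> [k Hk]; case: k Hk => [|[|[|?]]] Hk //.
  - by have -> : Ordinal Hk = inord 0 by apply/val_inj; rewrite /= inordK.
  - by have -> : Ordinal Hk = inord 1 by apply/val_inj; rewrite /= inordK.
  - by have -> : Ordinal Hk = inord 2 by apply/val_inj; rewrite /= inordK.
apply/matrixP => i j.
move: (key j) => /(congr1 (fun v : 'cV[C]_3 => v i 0)); by rewrite -!colE !mxE.
Qed.

Lemma phiv_b ga l m x y : 4 - ga != 0 -> phiv ga l m x y *m bvec ga l m = 0.
Proof.
move=> h; rewrite bvecE /phiv mulrowcv.
have -> : - (x * (l + 2) + y * (m + 2)) / (4 - ga) * (4 - ga) + x * (l + 2) +
   y * (m + 2) = 0 by field.
by rewrite raddf0.
Qed.

Lemma nu_form ga l m (g : 'M[C]_3) x y : 4 - ga != 0 ->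
  g *m bvec ga l m = bvec ga l m ->
  g *m avec C 1 = avec C 1 + x *: bvec ga l m ->
  g *m avec C 2 = avec C 2 + y *: bvec ga l m ->
  g = 1%:M + bvec ga l m *m phiv ga l m x y.
Proof.
move=> h hb h1 h2.
have e0 : avec C 0 = (4 - ga)^-1 *: (bvec ga l m - (l+2) *: avec C 1 - (m+2) *: avec C 2).
  conc; apply: cv3_eq; by field.
apply: col_ext.
- rewrite {1}e0 -scalemxAr mulmxBr mulmxBr -!scalemxAr hb h1 h2 /phiv.
  conc; apply: cv3_eq; by field.
- rewrite h1 /phiv; conc; apply: cv3_eq; by field.
- rewrite h2 /phiv; conc; apply: cv3_eq; by field.
Qed.

Lemma nu_check ga l m x y : 4 - ga != 0 ->
  let g := 1%:M + bvec ga l m *m phiv ga l m x y in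
  [/\ g *m bvec ga l m = bvec ga l m,
      g *m avec C 1 = avec C 1 + x *: bvec ga l m &
      g *m avec C 2 = avec C 2 + y *: bvec ga l m].
Proof.
move=> h g; rewrite /g /phiv; split; conc; apply: cv3_eq; by field.
Qed.
End NF.
Section G.
Variable C : numClosedFieldType.
Implicit Types (T g h : 'M[C]_3).
Lemma genG_mul T1 T2 T3 g h : genG T1 T2 T3 g -> genG T1 T2 T3 h -> genG T1 T2 T3 (g *m h).
Proof.
move=> Hg Hh; elim: Hg => [|g' _ IH|g' _ IH|g' _ IH].
- by rewrite mul1mx.
- by rewrite -mulmxA; apply: genG_1.
- by rewrite -mulmxA; apply: genG_2.
- by rewrite -mulmxA; apply: genG_3.
Qed.
Lemma genG_pow T1 T2 T3 g n : genG T1 T2 T3 g -> genG T1 T2 T3 (g ^+ n).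
Proof.
move=> Hg; elim: n => [|n IH]; first by rewrite expr0; apply: genG1.
by rewrite exprS -mulmxE; apply: genG_mul.
Qed.
Lemma genG_T1 T1 T2 T3 : genG T1 T2 T3 T1.
Proof. by have := genG_1 (genG1 T1 T2 T3); rewrite mulmx1. Qed.
Lemma genG_T2 T1 T2 T3 : genG T1 T2 T3 T2.
Proof. by have := genG_2 (genG1 T1 T2 T3); rewrite mulmx1. Qed.
Lemma genG_T3 T1 T2 T3 : genG T1 T2 T3 T3.
Proof. by have := genG_3 (genG1 T1 T2 T3); rewrite mulmx1. Qed.

Lemma root_facts (z : C) p : (3 <= p)%N -> p.-primitive_root z ->
  [/\ z != 0, z != 1 & z^+2 != 1].
Proof.
move=> p3 pr.
have zp := prim_expr_order pr.
split.
- apply/eqP => z0; move: zp; rewrite z0 expr0n.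
  have -> : (p == 0%N) = false by apply/negP => /eqP e; rewrite e in p3.
  by move/eqP; rewrite eq_sym oner_eq0.
- rewrite -[z]expr1 -(prim_order_dvd pr) dvdn1.
  by apply/negP => /eqP e; rewrite e in p3.
- rewrite -(prim_order_dvd pr); apply/negP => /(dvdn_leq (isT : (0 < 2)%N)).
  by move=> h; move: (leq_trans p3 h).
Qed.

Lemma root_half (z : C) p p1 : (3 <= p)%N -> p.-primitive_root z -> p = (2 * p1)%N ->
  z ^+ p1 = -1.
Proof.
move=> p3 pr pe.
have zp := prim_expr_order pr.
have : (z ^+ p1) ^+ 2 == 1 by rewrite -exprM mulnC -pe zp.
rewrite sqrf_eq1 => /orP [|/eqP //].
have p10 : (0 < p1)%N by rewrite lt0n; apply/negP => /eqP e; rewrite pe e in p3.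
rewrite -(prim_order_dvd pr) => /(dvdn_leq p10).
by rewrite pe leqNgt ltn_Pmull.
Qed.

Lemma four_sub (z : C) : z != 0 -> z != 1 -> 4 - cos2_param z != 0.
Proof.
move=> z0 z1; rewrite /cos2_param.
have -> : 4 - (2 + z + z^-1) = - ((z - 1) * (z - 1) / z) by field.
by rewrite oppr_eq0 !mulf_neq0 ?invr_eq0 // subr_eq0.
Qed.
End G.
Ltac fl := field; rewrite ?(negbTE _) //=;
  repeat match goal with H : is_true (_ != 0) |- _ => rewrite H /=; clear H end.

Section C1.
Variable C : numClosedFieldType.
Implicit Types (al be ga l m lam : C).
Lemma c1_rec al be ga l m lam1 lam2 : ga = l * m -> be = (8 - 2*al - 2*ga - al * l)/(m+2) ->
  m+2 != 0 -> 4 - ga != 0 ->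
  let t := S1 al be *m S2 l in
  let phi := phiv ga l m (lam1 * al) (lam1 * be) *m S2 l + phiv ga l m (lam2 * -2) (lam2 * l) in
  (phi *m t) *m t = (al - 2) *: (phi *m t) - phi.
Proof.
move=> hga hbe hm hg t phi; rewrite /t /phi /phiv; subst be; subst ga.
by conc; apply: row3_eq; fl.
Qed.

Lemma c1_fin al be ga l m lam1 lam2 : ga = l * m -> be = (8 - 2*al - 2*ga - al * l)/(m+2) ->
  m+2 != 0 -> 4 - ga != 0 -> 4 - al != 0 ->
  let t := S1 al be *m S2 l in
  let phi := phiv ga l m (lam1 * al) (lam1 * be) *m S2 l + phiv ga l m (lam2 * -2) (lam2 * l) in
  (4 - al)^-1 *: ((-2 * (al - 3)) *: phi + 2 *: (phi *m t)) =
  phiv ga l m (- 2 * lam2) (2 * (2 * be + al * l) / (4 - al) * lam1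
                    + 2 * (be + 2 * l) / (4 - al) * lam2).
Proof.
move=> hga hbe hm hg ha t phi; rewrite /t /phi /phiv; subst be; subst ga.
by conc; apply: row3_eq; fl.
Qed.

Lemma c2_rec al be ga l m lam1 lam3 : ga = l * m -> al = (8 - 2*be - 2*ga - be * m)/(l+2) ->
  l+2 != 0 -> 4 - ga != 0 ->
  let t := S1 al be *m S3 m in
  let phi := phiv ga l m (lam1 * al) (lam1 * be) *m S3 m + phiv ga l m (lam3 * m) (lam3 * -2) in
  (phi *m t) *m t = (be - 2) *: (phi *m t) - phi.
Proof.
move=> hga hal hl hg t phi; rewrite /t /phi /phiv; subst al; subst ga.
by conc; apply: row3_eq; fl.
Qed.

Lemma c2_fin al be ga l m lam1 lam3 : ga = l * m -> al = (8 - 2*be - 2*ga - be * m)/(l+2) ->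
  l+2 != 0 -> 4 - ga != 0 -> 4 - be != 0 ->
  let t := S1 al be *m S3 m in
  let phi := phiv ga l m (lam1 * al) (lam1 * be) *m S3 m + phiv ga l m (lam3 * m) (lam3 * -2) in
  (4 - be)^-1 *: ((-2 * (be - 3)) *: phi + 2 *: (phi *m t)) =
  phiv ga l m (2 * (2 * al + be * m) / (4 - be) * lam1
                     + 2 * (al + 2 * m) / (4 - be) * lam3) (- 2 * lam3).
Proof.
move=> hga hal hl hg hb t phi; rewrite /t /phi /phiv; subst al; subst ga.
by conc; apply: row3_eq; fl.
Qed.

Lemma c3_rec ga l m lam2 lam3 : ga = l * m -> 4 - ga != 0 ->
  let t := S2 l *m S3 m in
  let phi := phiv ga l m (lam2 * -2) (lam2 * l) *m S3 m + phiv ga l m (lam3 * m) (lam3 * -2) in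
  (phi *m t) *m t = (ga - 2) *: (phi *m t) - phi.
Proof.
move=> hga hg t phi; rewrite /t /phi /phiv; subst ga.
by conc; apply: row3_eq; fl.
Qed.

Lemma c3_fin ga l m lam2 lam3 : ga = l * m -> 4 - ga != 0 ->
  let t := S2 l *m S3 m in
  let phi := phiv ga l m (lam2 * -2) (lam2 * l) *m S3 m + phiv ga l m (lam3 * m) (lam3 * -2) in
  (4 - ga)^-1 *: ((-2 * (ga - 3)) *: phi + 2 *: (phi *m t)) =
  phiv ga l m (- 2 * lam2) (- 2 * lam3).
Proof.
move=> hga hg t phi; rewrite /t /phi /phiv; subst ga.
by conc; apply: row3_eq; fl.
Qed.

Lemma S1b al be ga l m : ga = l * m -> be = (8 - 2*al - 2*ga - al * l)/(m+2) -> m+2 != 0 ->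
  S1 al be *m bvec ga l m = bvec ga l m.
Proof. move=> hga hbe hm; subst be; subst ga; by conc; apply: cv3_eq; fl. Qed.
Lemma S2b ga l m : ga = l * m -> S2 l *m bvec ga l m = bvec ga l m.
Proof. move=> hga; subst ga; by conc; apply: cv3_eq; ring. Qed.
Lemma S3b ga l m : ga = l * m -> S3 m *m bvec ga l m = bvec ga l m.
Proof. move=> hga; subst ga; by conc; apply: cv3_eq; ring. Qed.
Lemma S1S1 al be : S1 al be *m S1 al be = 1%:M.
Proof. by conc; apply: mx3_eq; ring. Qed.
Lemma S2S2 l : S2 l *m S2 l = 1%:M.
Proof. by conc; apply: mx3_eq; ring. Qed.
Lemma S3S3 m : S3 m *m S3 m = 1%:M.
Proof. by conc; apply: mx3_eq; ring. Qed.
End C1.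

Unset Implicit Arguments.

Lemma inv_pow (C : numClosedFieldType) (x y g : 'M[C]_3) n :
  x *m y = 1%:M -> y *m x = 1%:M -> x ^+ n *m (y ^+ n *m g) = g.
Proof.
move=> xy yx; rewrite mulmxA.
have -> : x ^+ n *m y ^+ n = 1%:M.
  change (x ^+ n * y ^+ n = 1); rewrite -exprMn_comm.
    by change ((x *m y) ^+ n = 1); rewrite xy expr1n.
  by rewrite /GRing.comm; change (x *m y = y *m x); rewrite xy yx.
by rewrite mul1mx.
Qed.

Lemma genG_cancel (C : numClosedFieldType) (T1 T2 T3 x y g : 'M[C]_3) n :
  x *m y = 1%:M -> y *m x = 1%:M -> genG T1 T2 T3 (x ^+ n *m (y ^+ n *m g)) ->
  genG T1 T2 T3 g.
Proof. by move=> xy yx; rewrite inv_pow. Qed.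

Theorem corollary2 (C : numClosedFieldType) (p q r : nat) (z1 z2 z3 l m : C)
    (lam1 lam2 lam3 : C) (nu1 nu2 nu3 : 'M[C]_3) :
  (3 <= p)%N -> (3 <= q)%N -> (3 <= r)%N ->
  p.-primitive_root z1 -> q.-primitive_root z2 -> r.-primitive_root z3 ->
  let al := cos2_param z1 in
  let be := cos2_param z2 in
  let ga := cos2_param z3 in
  l * m = ga ->
  Delta al be ga l m = 0 ->
  inN_with al be ga l m nu1 (lam1 *: c1 al be) ->
  inN_with al be ga l m nu2 (lam2 *: c2 l) ->
  inN_with al be ga l m nu3 (lam3 *: c3 m) ->
  let s1 := S1 al be in let s2 := S2 l in let s3 := S3 m in
  let s1' := s1 *m nu1 in let s2' := s2 *m nu2 in let s3' := s3 *m nu3 in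
  [/\ forall p1 : nat, p = (2 * p1)%N ->
        let nu := (2 / (4 - al)) *:
                    ((2 * lam1 + lam2) *: c1 al be + (al * lam1 + 2 * lam2) *: c2 l) in
        nu = pair2 (- 2 * lam2)
                   (2 * (2 * be + al * l) / (4 - al) * lam1
                    + 2 * (be + 2 * l) / (4 - al) * lam2) /\
        exists nuM : 'M[C]_3, inN_with al be ga l m nuM nu /\
          (s1' *m s2') ^+ p1 = (s1 *m s2) ^+ p1 *m nuM,
      forall q1 : nat, q = (2 * q1)%N ->
        let nu' := (2 / (4 - be)) *:
                    ((2 * lam1 + lam3) *: c1 al be + (be * lam1 + 2 * lam3) *: c3 m) in
        nu' = pair2 (2 * (2 * al + be * m) / (4 - be) * lam1
                     + 2 * (al + 2 * m) / (4 - be) * lam3)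
                    (- 2 * lam3) /\
        exists nuM : 'M[C]_3, inN_with al be ga l m nuM nu' /\
          (s1' *m s3') ^+ q1 = (s1 *m s3) ^+ q1 *m nuM &
      forall r1 : nat, r = (2 * r1)%N ->
        let nu'' := (2 / (4 - ga)) *:
                    ((2 * lam2 + m * lam3) *: c2 l + (l * lam2 + 2 * lam3) *: c3 m) in
        nu'' = pair2 (- 2 * lam2) (- 2 * lam3) /\
        exists nuM : 'M[C]_3, inN_with al be ga l m nuM nu'' /\
          (s2' *m s3') ^+ r1 = (s2 *m s3) ^+ r1 *m nuM].
Proof.
move=> p3 q3 r3 pr1 pr2 pr3 al be ga hlm hD hN1 hN2 hN3 s1 s2 s3 s1' s2' s3'.
have [z10 z11 z12] := root_facts p3 pr1.
have [z20 z21 z22] := root_facts q3 pr2.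
have [z30 z31 z32] := root_facts r3 pr3.
have a4 : 4 - al != 0 := four_sub z10 z11.
have b4 : 4 - be != 0 := four_sub z20 z21.
have g4 : 4 - ga != 0 := four_sub z30 z31.
have hal2 : al - 2 = z1 + z1^-1 by rewrite /al /cos2_param; ring.
have hbe2 : be - 2 = z2 + z2^-1 by rewrite /be /cos2_param; ring.
have hga2 : ga - 2 = z3 + z3^-1 by rewrite /ga /cos2_param; ring.
have hal4 : 2 - z1 - z1^-1 = 4 - al by rewrite /al /cos2_param; ring.
have hbe4 : 2 - z2 - z2^-1 = 4 - be by rewrite /be /cos2_param; ring.
have hga4 : 2 - z3 - z3^-1 = 4 - ga by rewrite /ga /cos2_param; ring.
have hal3 : -2 * (z1 + z1^-1 - 1) = -2 * (al - 3) by rewrite /al /cos2_param; ring.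
have hbe3 : -2 * (z2 + z2^-1 - 1) = -2 * (be - 3) by rewrite /be /cos2_param; ring.
have hga3 : -2 * (z3 + z3^-1 - 1) = -2 * (ga - 3) by rewrite /ga /cos2_param; ring.
clearbody al be ga.
have hga : ga = l * m by rewrite hlm.
have e1 : (m + 2) * (2 * be + al * l) = (4 - al) * (4 - ga).
  apply/eqP; rewrite -subr_eq0.
  have -> : (m + 2) * (2 * be + al * l) - (4 - al) * (4 - ga) =
    -2 * Delta al be ga l m + al * (l * m - ga) by rewrite /Delta; ring.
  by rewrite hD hlm subrr !mulr0 addr0.
have e2 : (l + 2) * (2 * al + be * m) = (4 - be) * (4 - ga).
  apply/eqP; rewrite -subr_eq0.
  have -> : (l + 2) * (2 * al + be * m) - (4 - be) * (4 - ga) =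
    -2 * Delta al be ga l m + be * (l * m - ga) by rewrite /Delta; ring.
  by rewrite hD hlm subrr !mulr0 addr0.
have m2 : m + 2 != 0.
  apply/eqP => e; move: (mulf_neq0 a4 g4); by rewrite -e1 e mul0r eqxx.
have l2 : l + 2 != 0.
  apply/eqP => e; move: (mulf_neq0 b4 g4); by rewrite -e2 e mul0r eqxx.
have hbe : be = (8 - 2*al - 2*ga - al * l)/(m+2).
  have e : be * (m + 2) = 8 - 2*al - 2*ga - al * l.
    apply/eqP; rewrite -subr_eq0.
    have -> : be * (m + 2) - (8 - 2*al - 2*ga - al * l) = - Delta al be ga l m
      by rewrite /Delta; ring.
    by rewrite hD oppr0.
  by rewrite -e mulfK.
have hal : al = (8 - 2*be - 2*ga - be * m)/(l+2).
  have e : al * (l + 2) = 8 - 2*be - 2*ga - be * m.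
    apply/eqP; rewrite -subr_eq0.
    have -> : al * (l + 2) - (8 - 2*be - 2*ga - be * m) = - Delta al be ga l m
      by rewrite /Delta; ring.
    by rewrite hD oppr0.
  by rewrite -e mulfK.
case: hN1 => G1 nb1 n11 n12.
case: hN2 => G2 nb2 n21 n22.
case: hN3 => G3 nb3 n31 n32.
rewrite /c1 scalepair2 !mxE /= in n11 n12.
rewrite /c2 scalepair2 !mxE /= in n21 n22.
rewrite /c3 scalepair2 !mxE /= in n31 n32.
have N1 := nu_form g4 nb1 n11 n12.
have N2 := nu_form g4 nb2 n21 n22.
have N3 := nu_form g4 nb3 n31 n32.
have s1b : s1 *m bvec ga l m = bvec ga l m := S1b hga hbe m2.
have s2b : s2 *m bvec ga l m = bvec ga l m := S2b hga.
have s3b : s3 *m bvec ga l m = bvec ga l m := S3b hga.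
have s11 : s1 *m s1 = 1%:M := S1S1 al be.
have s22 : s2 *m s2 = 1%:M := S2S2 l.
have s33 : s3 *m s3 = 1%:M := S3S3 m.
have pb := fun x y => phiv_b l m x y g4.
split => [p1 hp1 nu | q1 hq1 nu' | r1 hr1 nu''].
- have hnu : nu = pair2 (- 2 * lam2) (2 * (2 * be + al * l) / (4 - al) * lam1
                    + 2 * (be + 2 * l) / (4 - al) * lam2).
    rewrite /nu /c1 /c2 !scalepair2 addpair2 scalepair2; apply: pair2_eq; by fl.
  clearbody nu; subst nu; split => //.
  set t := s1 *m s2.
  set phi := phiv ga l m (lam1 * al) (lam1 * be) *m S2 l + phiv ga l m (lam2 * -2) (lam2 * l).
  have ht' : s1' *m s2' = t *m (1%:M + bvec ga l m *m phi).
    by rewrite /s1' /s2' N1 N2 /t (conj_step _ _ s2b (pb _ _)).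
  have hrec : (phi *m t) *m t = (z1 + z1^-1) *: (phi *m t) - phi.
    by rewrite -hal2; exact: (c1_rec lam1 lam2 hga hbe m2 g4).
  have hzp := root_half p3 pr1 hp1.
  have HU : Useq t phi p1 = phiv ga l m (- 2 * lam2) (2 * (2 * be + al * l) / (4 - al) * lam1
                    + 2 * (be + 2 * l) / (4 - al) * lam2).
    rewrite (Useq_half z10 z11 z12 hzp (erefl _) hrec) hal4 hal3.
    exact: (c1_fin lam1 lam2 hga hbe m2 g4 a4).
  have tb : t *m bvec ga l m = bvec ga l m by rewrite /t -mulmxA s2b s1b.
  have phb : phi *m bvec ga l m = 0 by rewrite /phi mulmxDl -mulmxA s2b !pb addr0.
  have Hpow : (s1' *m s2') ^+ p1 = t ^+ p1 *m (1%:M + bvec ga l m *m phiv ga l m (- 2 * lam2)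
      (2 * (2 * be + al * l) / (4 - al) * lam1 + 2 * (be + 2 * l) / (4 - al) * lam2)).
    by rewrite ht' (pow_tmu tb phb) HU.
  exists (1%:M + bvec ga l m *m phiv ga l m (- 2 * lam2)
      (2 * (2 * be + al * l) / (4 - al) * lam1 + 2 * (be + 2 * l) / (4 - al) * lam2)).
  split; last exact: Hpow.
  have [c1' c2' c3'] := nu_check l m (- 2 * lam2)
      (2 * (2 * be + al * l) / (4 - al) * lam1 + 2 * (be + 2 * l) / (4 - al) * lam2) g4.
  rewrite /inN_with !mxE /=; split => //.
  apply: (@genG_cancel _ _ _ _ (s2 *m s1) t _ p1).
  + by rewrite /t mulmxA -(mulmxA s2) s11 mulmx1 s22.
  + by rewrite /t mulmxA -(mulmxA s1) s22 mulmx1 s11.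
  rewrite -Hpow.
  apply: genG_mul; apply: genG_pow; first by apply: genG_mul; [apply: genG_T2 | apply: genG_T1].
  by apply: genG_mul; apply: genG_mul => //; [apply: genG_T1 | apply: genG_T2].
- have hnu : nu' = pair2 (2 * (2 * al + be * m) / (4 - be) * lam1
                     + 2 * (al + 2 * m) / (4 - be) * lam3) (- 2 * lam3).
    rewrite /nu' /c1 /c3 !scalepair2 addpair2 scalepair2; apply: pair2_eq; by fl.
  clearbody nu'; subst nu'; split => //.
  set t := s1 *m s3.
  set phi := phiv ga l m (lam1 * al) (lam1 * be) *m S3 m + phiv ga l m (lam3 * m) (lam3 * -2).
  have ht' : s1' *m s3' = t *m (1%:M + bvec ga l m *m phi).
    by rewrite /s1' /s3' N1 N3 /t (conj_step _ _ s3b (pb _ _)).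
  have hrec : (phi *m t) *m t = (z2 + z2^-1) *: (phi *m t) - phi.
    by rewrite -hbe2; exact: (c2_rec lam1 lam3 hga hal l2 g4).
  have hzp := root_half q3 pr2 hq1.
  have HU : Useq t phi q1 = phiv ga l m (2 * (2 * al + be * m) / (4 - be) * lam1
                     + 2 * (al + 2 * m) / (4 - be) * lam3) (- 2 * lam3).
    rewrite (Useq_half z20 z21 z22 hzp (erefl _) hrec) hbe4 hbe3.
    exact: (c2_fin lam1 lam3 hga hal l2 g4 b4).
  have tb : t *m bvec ga l m = bvec ga l m by rewrite /t -mulmxA s3b s1b.
  have phb : phi *m bvec ga l m = 0 by rewrite /phi mulmxDl -mulmxA s3b !pb addr0.
  have Hpow : (s1' *m s3') ^+ q1 = t ^+ q1 *m (1%:M + bvec ga l m *m phiv ga l m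
      (2 * (2 * al + be * m) / (4 - be) * lam1 + 2 * (al + 2 * m) / (4 - be) * lam3) (- 2 * lam3)).
    by rewrite ht' (pow_tmu tb phb) HU.
  exists (1%:M + bvec ga l m *m phiv ga l m
      (2 * (2 * al + be * m) / (4 - be) * lam1 + 2 * (al + 2 * m) / (4 - be) * lam3) (- 2 * lam3)).
  split; last exact: Hpow.
  have [c1' c2' c3'] := nu_check l m
      (2 * (2 * al + be * m) / (4 - be) * lam1 + 2 * (al + 2 * m) / (4 - be) * lam3) (- 2 * lam3) g4.
  rewrite /inN_with !mxE /=; split => //.
  apply: (@genG_cancel _ _ _ _ (s3 *m s1) t _ q1).
  + by rewrite /t mulmxA -(mulmxA s3) s11 mulmx1 s33.
  + by rewrite /t mulmxA -(mulmxA s1) s33 mulmx1 s11.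
  rewrite -Hpow.
  apply: genG_mul; apply: genG_pow; first by apply: genG_mul; [apply: genG_T3 | apply: genG_T1].
  by apply: genG_mul; apply: genG_mul => //; [apply: genG_T1 | apply: genG_T3].
- have g4' : 4 - l * m != 0 by rewrite -hga.
  have hnu : nu'' = pair2 (- 2 * lam2) (- 2 * lam3).
    rewrite /nu'' /c2 /c3 !scalepair2 addpair2 scalepair2 hga; apply: pair2_eq; by fl.
  clearbody nu''; subst nu''; split => //.
  set t := s2 *m s3.
  set phi := phiv ga l m (lam2 * -2) (lam2 * l) *m S3 m + phiv ga l m (lam3 * m) (lam3 * -2).
  have ht' : s2' *m s3' = t *m (1%:M + bvec ga l m *m phi).
    by rewrite /s2' /s3' N2 N3 /t (conj_step _ _ s3b (pb _ _)).
  have hrec : (phi *m t) *m t = (z3 + z3^-1) *: (phi *m t) - phi.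
    by rewrite -hga2; exact: (c3_rec lam2 lam3 hga g4).
  have hzp := root_half r3 pr3 hr1.
  have HU : Useq t phi r1 = phiv ga l m (- 2 * lam2) (- 2 * lam3).
    rewrite (Useq_half z30 z31 z32 hzp (erefl _) hrec) hga4 hga3.
    exact: (c3_fin lam2 lam3 hga g4).
  have tb : t *m bvec ga l m = bvec ga l m by rewrite /t -mulmxA s3b s2b.
  have phb : phi *m bvec ga l m = 0 by rewrite /phi mulmxDl -mulmxA s3b !pb addr0.
  have Hpow : (s2' *m s3') ^+ r1 = t ^+ r1 *m (1%:M + bvec ga l m *m phiv ga l m
      (- 2 * lam2) (- 2 * lam3)).
    by rewrite ht' (pow_tmu tb phb) HU.
  exists (1%:M + bvec ga l m *m phiv ga l m (- 2 * lam2) (- 2 * lam3)).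
  split; last exact: Hpow.
  have [c1' c2' c3'] := nu_check l m (- 2 * lam2) (- 2 * lam3) g4.
  rewrite /inN_with !mxE /=; split => //.
  apply: (@genG_cancel _ _ _ _ (s3 *m s2) t _ r1).
  + by rewrite /t mulmxA -(mulmxA s3) s22 mulmx1 s33.
  + by rewrite /t mulmxA -(mulmxA s2) s33 mulmx1 s22.
  rewrite -Hpow.
  apply: genG_mul; apply: genG_pow; first by apply: genG_mul; [apply: genG_T3 | apply: genG_T2].
  by apply: genG_mul; apply: genG_mul => //; [apply: genG_T2 | apply: genG_T3].
Qed.
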